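(* Let $\lambda,\mu,\nu\in P^+$ and suppose $(\lambda,\mu,\nu)$ is a low triple in $P^+$. Then there are integers $a,b\ge1$ such that $\{\lambda,\mu\}=\{au,bv\}$. If $\lambda=au$, $\mu=bv$ with $a\ge b$, then $\nu=\nu'+(a-b)u$ for some $\nu'\in\Lambda^+$ with $\nu'\le b\,\omega_\ell$. Moreover, if $\{\lambda,\mu\}=\{u,v\}$ then $\nu=0$.
   Context: Let $\Phi$ be of type $\mathsf{BC}_\ell$ realized in a Euclidean space $E$: the union of root systems of type $\mathsf B_\ell$ and $\mathsf C_\ell$, with basis $\alpha_1,\dots,\alpha_\ell$ the basis of $\mathsf B_\ell$ (Bourbaki numbering), $2\alpha_\ell\in\Phi$, and fundamental weights $\omega_1,\dots,\omega_\ell$ dual to $\alpha_1^\vee,\dots,\alpha_{\ell-1}^\vee,(2\alpha_\ell)^\vee$. Embed $E=E\times 0\subset E\times\mathbb R$ and take two linearly independent vectors $u,v\in (E\times\mathbb R)\setminus(E\times 0)$ with $u+v=\omega_\ell$. Let $\Lambda^+=\sum_{i=1}^\ell\mathbb N\omega_i$, $P^+=\sum_{i=1}^{\ell-1}\mathbb N\omega_i+\mathbb Nu+\mathbb Nv$, and $P$ the lattice generated by $P^+$. Order $P$ by $\mu\le\lambda$ iff $\lambda-\mu\in R^+$, where $R^+$ is the $\mathbb N$-span of $\alpha_1,\dots,\alpha_\ell$. A triple $(\lambda,\mu,\nu)$ in $P^+$ is a low triple if (i) whenever $\lambda',\mu'\in P^+$ with $\lambda'\le\lambda$, $\mu'\le\mu$,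 $\nu\le\lambda'+\mu'$, then $\lambda'=\lambda$ and $\mu'=\mu$; and (ii) $\nu+\sum_{i=1}^\ell\alpha_i\le\lambda+\mu$. *)

(* Defs.v *)
From HB Require Import structures.
From mathcomp Require Import all_boot all_order all_algebra.
From mathcomp Require Import reals.
Set Implicit Arguments. Unset Strict Implicit. Unset Printing Implicit Defensive.
Import Order.TTheory GRing.Theory Num.Theory.
Local Open Scope ring_scope.

(* E x R is modelled as 'rV[R]_(l.+1): coordinates 0..l-1 are E = R^l
   (standard basis e_1..e_l, indexed from 1 as in the paper), coordinate l
   is the extra R factor.  E x 0 = vectors with last coordinate 0. *)
Section BC.
Variables (R : realType) (l : nat).

Definition ebasis (i : nat) : 'rV[R]_(l.+1) := \row_(j < l.+1) ((j.+1 == i)%N)%:R.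

Definition sroot (i : nat) : 'rV[R]_(l.+1) :=
  if (i < l)%N then ebasis i - ebasis i.+1 else ebasis l.

(* fundamental weights dual to a_1^v,...,a_{l-1}^v,(2a_l)^v :
   w_i = e_1 + ... + e_i *)
Definition fweight (i : nat) : 'rV[R]_(l.+1) := \sum_(1 <= k < i.+1) ebasis k.

Definition Rplus (x : 'rV[R]_(l.+1)) : Prop :=
  exists c : nat -> nat, x = \sum_(1 <= i < l.+1) (c i)%:R *: sroot i.

Definition Lplus (x : 'rV[R]_(l.+1)) : Prop :=
  exists c : nat -> nat, x = \sum_(1 <= i < l.+1) (c i)%:R *: fweight i.

Definition Pplus (u v x : 'rV[R]_(l.+1)) : Prop :=
  exists (c : nat -> nat) (a b : nat),
    x = \sum_(1 <= i < l) (c i)%:R *: fweight i + a%:R *: u + b%:R *: v.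

Definition wle (mu lam : 'rV[R]_(l.+1)) : Prop := Rplus (lam - mu).

Definition low_triple (u v lam mu nu : 'rV[R]_(l.+1)) : Prop :=
  [/\ Pplus u v lam, Pplus u v mu, Pplus u v nu,
      (forall lam' mu', Pplus u v lam' -> Pplus u v mu' ->
         wle lam' lam -> wle mu' mu -> wle nu (lam' + mu') ->
         lam' = lam /\ mu' = mu)
    & wle (nu + \sum_(1 <= i < l.+1) sroot i) (lam + mu)].

End BC.

(* Main.v *)
Require Import Defs.
From HB Require Import structures.
From mathcomp Require Import all_boot all_order all_algebra.
From mathcomp Require Import reals.
From mathcomp Require Import zify ring lra.
Import Order.TTheory GRing.Theory Num.Theory.
Local Open Scope ring_scope.

Lemma ebE (R : realType) l i j : ebasis R l i 0 j = ((j.+1 == i)%N)%:R :> R.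
Proof. by rewrite mxE. Qed.

Lemma sroot_last (R : realType) l i : sroot R l i 0 ord_max = 0.
Proof.
rewrite /sroot; case: ifP => hi; rewrite !mxE /=.
  have -> : (l.+1 == i)%N = false by lia.
  have -> : (l.+1 == i.+1)%N = false by lia.
  by rewrite subrr.
by have -> : (l.+1 == l)%N = false by lia.
Qed.

Lemma sroot_0 (R : realType) l i : (1 <= i)%N -> 0 <= sroot R l i 0 0.
Proof.
move=> hi; rewrite /sroot; case: ifP => hl; rewrite !mxE /=.
  have -> : (1 == i.+1)%N = false by lia.
  by rewrite subr0 ler0n.
by rewrite ler0n.
Qed.

Lemma fw_last (R : realType) l i : (i <= l)%N -> fweight R l i 0 ord_max = 0.
Proof.
move=> hi; rewrite /fweight summxE big1_seq // => k /andP[_].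
rewrite mem_index_iota => /andP[_ hk]; rewrite ebE /=.
by have -> : (l.+1 == k)%N = false by lia.
Qed.

Lemma fw_0 (R : realType) l i : (1 <= i)%N -> fweight R l i 0 0 = 1.
Proof.
move=> hi; rewrite /fweight summxE big_ltn // ebE /= big1_seq ?addr0 //.
move=> k /andP[_]; rewrite mem_index_iota => /andP[hk _]; rewrite ebE /=.
by have -> : (1 == k)%N = false by lia.
Qed.

Lemma Rplus_add (R : realType) l (x y : 'rV[R]_(l.+1)) : Rplus x -> Rplus y -> Rplus (x + y).
Proof.
move=> [c ->] [d ->]; exists (fun i => (c i + d i)%N).
by rewrite -big_split /=; apply: eq_bigr => i _; rewrite natrD scalerDl.
Qed.

Lemma Rplus_0 (R : realType) l : Rplus (0 : 'rV[R]_(l.+1)).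
Proof. by exists (fun _ => 0%N); rewrite big1 // => i _; rewrite scale0r. Qed.

Lemma Rplus_last (R : realType) l (x : 'rV[R]_(l.+1)) : Rplus x -> x 0 ord_max = 0.
Proof.
move=> [c ->]; rewrite summxE big1 // => i _.
by rewrite mxE sroot_last mulr0.
Qed.

Lemma Rplus_ge0 (R : realType) l (x : 'rV[R]_(l.+1)) : Rplus x -> 0 <= x 0 0.
Proof.
move=> [c ->]; rewrite summxE big_seq sumr_ge0 // => i.
rewrite mem_index_iota => /andP[hi _].
by rewrite mxE mulr_ge0 ?ler0n ?sroot_0.
Qed.

Lemma tail_sum (R : realType) l i : (1 <= i <= l)%N ->
  \sum_(i <= k < l.+1) sroot R l k = ebasis R l i.
Proof.
move=> /andP[h1 h2].
have [n hn] : exists n, i = (l - n)%N by exists (l - i)%N; lia.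
elim: n i h1 h2 hn => [|n IH] i h1 h2 hn.
  rewrite subn0 in hn; subst i.
  by rewrite big_ltn // big_geq // addr0 /sroot ltnn.
case: (ltnP i l) => hil; last first.
  have -> : i = l by lia.
  by rewrite big_ltn // big_geq // addr0 /sroot ltnn.
rewrite big_ltn; last by lia.
rewrite (IH i.+1) //; try lia.
by rewrite /sroot hil subrK.
Qed.

Lemma sum_sroot (R : realType) l : (0 < l)%N ->
  \sum_(1 <= k < l.+1) sroot R l k = ebasis R l 1.
Proof. by move=> hl; rewrite tail_sum //; lia. Qed.

Lemma eb_sum (R : realType) l i : (1 <= i <= l)%N -> ebasis R l i =
  \sum_(1 <= k < l.+1) (i <= k)%N%:R *: sroot R l k.
Proof.
move=> hi.
rewrite -tail_sum // [RHS](big_cat_nat _ (n := i)) /=; [|lia|lia].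
rewrite [X in _ = X + _]big1_seq ?add0r; last first.
  move=> k /andP[_]; rewrite mem_index_iota => /andP[_ hk].
  have -> : (i <= k)%N = false by lia.
  by rewrite scale0r.
rewrite big_seq_cond [RHS]big_seq_cond; apply: eq_bigr => k.
rewrite mem_index_iota andbT => /andP[hk _].
by rewrite hk scale1r.
Qed.

Lemma eb_Rplus (R : realType) l i : (1 <= i <= l)%N -> Rplus (ebasis R l i).
Proof. by move=> hi; exists (fun k => (i <= k)%N); rewrite eb_sum. Qed.

Lemma eb_Rplus' (R : realType) l i : (1 <= i <= l)%N ->
  Rplus (\sum_(1 <= k < l.+1) sroot R l k - ebasis R l i).
Proof.
move=> hi.
exists (fun k => (k < i)%N); rewrite eb_sum // -sumrB; apply: eq_bigr => k _.
case: (leqP i k) => hk /=; first by rewrite scale1r scale0r subrr.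
by rewrite scale0r subr0 scale1r.
Qed.

Lemma eb_neq0 (R : realType) l i : (1 <= i <= l)%N -> ebasis R l i != 0.
Proof.
move=> hi; apply/eqP => h.
have := congr1 (fun x : 'rV[R]_(l.+1) => x 0 (inord i.-1)) h.
rewrite ebE mxE inordK; last by lia.
have -> : (i.-1.+1 == i)%N by lia.
by move/eqP; rewrite oner_eq0.
Qed.

Lemma subKeq (R : realType) l (x e : 'rV[R]_(l.+1)) : x - (x - e) = e.
Proof. by rewrite opprB addrC subrK. Qed.

Lemma low_red_l (R : realType) l (u v lam mu nu : 'rV[R]_(l.+1)) i :
  low_triple u v lam mu nu -> (1 <= i <= l)%N ->
  Pplus u v (lam - ebasis R l i) -> False.
Proof.
move=> [_ Pmu _ H Hii] hi Pl.
have [h _] : lam - ebasis R l i = lam /\ mu = mu.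
  apply: H => //.
- by rewrite /wle subKeq; apply: eb_Rplus.
- by rewrite /wle subrr; apply: Rplus_0.
- rewrite /wle.
  have -> : lam - ebasis R l i + mu - nu =
    lam + mu - (nu + \sum_(1 <= k < l.+1) sroot R l k) +
    (\sum_(1 <= k < l.+1) sroot R l k - ebasis R l i).
    by rewrite opprD !addrA subrK (addrAC lam) (addrAC (lam + mu)).
  by apply: Rplus_add => //; apply: eb_Rplus'.
have := congr1 (fun x => lam - x) h; rewrite subKeq subrr => /eqP.
by rewrite (negbTE (eb_neq0 R l i hi)).
Qed.

Lemma low_red_r (R : realType) l (u v lam mu nu : 'rV[R]_(l.+1)) i :
  low_triple u v lam mu nu -> (1 <= i <= l)%N ->
  Pplus u v (mu - ebasis R l i) -> False.
Proof.
move=> [Plam _ _ H Hii] hi Pm.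
have [_ h] : lam = lam /\ mu - ebasis R l i = mu.
  apply: H => //.
- by rewrite /wle subrr; apply: Rplus_0.
- by rewrite /wle subKeq; apply: eb_Rplus.
- rewrite /wle.
  have -> : lam + (mu - ebasis R l i) - nu =
    lam + mu - (nu + \sum_(1 <= k < l.+1) sroot R l k) +
    (\sum_(1 <= k < l.+1) sroot R l k - ebasis R l i).
    by rewrite opprD !addrA subrK (addrAC (lam + mu)).
  by apply: Rplus_add => //; apply: eb_Rplus'.
have := congr1 (fun x => mu - x) h; rewrite subKeq subrr => /eqP.
by rewrite (negbTE (eb_neq0 R l i hi)).
Qed.

Lemma sum_ind (R : realType) l (F : nat -> 'rV[R]_(l.+1)) m n j :
  \sum_(m <= k < n) ((k == j)%N)%:R *: F k = if (m <= j < n)%N then F j else 0.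
Proof.
case: ifP => h.
  rewrite (big_cat_nat _ (n := j)) /=; [|lia|lia].
  rewrite [X in _ + X]big_ltn; last by lia.
  rewrite eqxx scale1r big1_seq ?add0r; last first.
    move=> k /andP[_]; rewrite mem_index_iota => hk.
    have -> : (k == j)%N = false by lia.
    by rewrite scale0r.
  rewrite big1_seq ?addr0 // => k /andP[_]; rewrite mem_index_iota => hk.
  have -> : (k == j)%N = false by lia.
  by rewrite scale0r.
rewrite big1_seq // => k /andP[_]; rewrite mem_index_iota => hk.
have -> : (k == j)%N = false by lia.
by rewrite scale0r.
Qed.

Lemma fw_S (R : realType) l i : (1 <= i)%N ->
  fweight R l i = fweight R l i.-1 + ebasis R l i.
Proof. by case: i => // j _; rewrite /fweight big_nat_recr. Qed.

Lemma fw_pred_sum (R : realType) l i : (1 <= i <= l)%N ->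
  \sum_(1 <= k < l) ((k == i.-1)%N)%:R *: fweight R l k = fweight R l i.-1.
Proof.
move=> hi; rewrite sum_ind; case: ifP => // /negbT h.
have -> : i.-1 = 0%N by lia.
by rewrite /fweight big_geq.
Qed.

Ltac lin := apply/rowP => j; rewrite !mxE; ring.

Lemma Pplus_red (R : realType) l (u v lam : 'rV[R]_(l.+1)) :
  (0 < l)%N -> u + v = fweight R l l -> Pplus u v lam ->
  (forall i, (1 <= i <= l)%N -> Pplus u v (lam - ebasis R l i) -> False) ->
  exists a : nat, lam = a%:R *: u \/ lam = a%:R *: v.
Proof.
move=> hl huv [c [a [b ->]]] Hr.
case: (boolP (has (fun k => 0 < c k)%N (index_iota 1 l))) => hc.
  case/hasP: hc => i; rewrite mem_index_iota => /andP[i1 il] ci.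
  exfalso; apply: (Hr i); first lia.
  exists (fun k => (c k - (k == i) + (k == i.-1))%N), a, b.
  have -> : \sum_(1 <= k < l) (c k - (k == i) + (k == i.-1))%N%:R *: fweight R l k =
    \sum_(1 <= k < l) (c k)%:R *: fweight R l k
    - \sum_(1 <= k < l) ((k == i)%N)%:R *: fweight R l k
    + \sum_(1 <= k < l) ((k == i.-1)%N)%:R *: fweight R l k.
    rewrite -sumrB -big_split; apply: eq_bigr => k _.
    rewrite natrD scalerDl -scalerBl; congr (_ *: _ + _).
    case: eqP => [->|_]; first by rewrite natrB.
    by rewrite subn0 subr0.
  rewrite fw_pred_sum; last by lia.
  rewrite sum_ind; have -> : (1 <= i < l)%N by lia.
  rewrite (fw_S R l i i1); lin.
move/hasPn: hc => hc.
have c0 : \sum_(1 <= k < l) (c k)%:R *: fweight R l k = 0.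
  rewrite big1_seq // => k /andP[_ hk].
  have := hc k hk; rewrite lt0n negbK => /eqP ->.
  by rewrite scale0r.
rewrite c0 add0r in Hr *.
case: (posnP a) => [a0|apos]; first by exists b; right; rewrite a0 scale0r add0r.
case: (posnP b) => [b0|bpos]; first by exists a; left; rewrite b0 scale0r addr0.
exfalso; apply: (Hr l); first lia.
exists (fun k => (k == l.-1)%N), a.-1, b.-1.
rewrite fw_pred_sum; last by lia.
have ha : a%:R = a.-1%:R + 1 :> R by rewrite natr1 prednK.
have hb : b%:R = b.-1%:R + 1 :> R by rewrite natr1 prednK.
have hw : fweight R l l.-1 = u + v - ebasis R l l by rewrite huv (fw_S R l l hl) addrK.
rewrite ha hb hw; lin.
Qed.

Lemma coord_key (R : realType) l (u v lam mu nu : 'rV[R]_(l.+1)) :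
  (0 < l)%N -> u 0 ord_max != 0 -> u + v = fweight R l l ->
  Pplus u v nu -> wle (nu + \sum_(1 <= i < l.+1) sroot R l i) (lam + mu) ->
  forall A B : nat, lam + mu = A%:R *: u + B%:R *: v ->
  exists c p q, [/\ nu = \sum_(1 <= k < l) (c k)%:R *: fweight R l k + p%:R *: u + q%:R *: v,
    (p%:R - q%:R = A%:R - B%:R :> R),
    q%:R + \sum_(1 <= k < l) (c k)%:R + 1 <= B%:R :> R &
    p%:R + \sum_(1 <= k < l) (c k)%:R + 1 <= A%:R :> R].
Proof.
move=> hl hu huv [c [p [q hnu]]] Hii A B hAB.
exists c, p, q.
have hl0 := Rplus_last _ _ _ Hii; have hg0 := Rplus_ge0 _ _ _ Hii.
have s_last : (\sum_(1 <= k < l) (c k)%:R *: fweight R l k) 0 ord_max = 0.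
  rewrite summxE big1_seq // => k /andP[_]; rewrite mem_index_iota => /andP[_ hk].
  by rewrite mxE fw_last ?mulr0 //; lia.
have s_0 : (\sum_(1 <= k < l) (c k)%:R *: fweight R l k) 0 0 = \sum_(1 <= k < l) (c k)%:R.
  rewrite summxE big_seq_cond [RHS]big_seq_cond; apply: eq_bigr => k.
  rewrite mem_index_iota andbT => /andP[hk _].
  by rewrite mxE fw_0 ?mulr1.
have v_last : v 0 ord_max = - u 0 ord_max.
  have := congr1 (fun x : 'rV[R]_(l.+1) => x 0 ord_max) huv.
  rewrite mxE fw_last // => /eqP; rewrite addrC addr_eq0 => /eqP //.
have v_0 : v 0 0 = 1 - u 0 0.
  have := congr1 (fun x : 'rV[R]_(l.+1) => x 0 0) huv.
  by rewrite mxE fw_0 // => <-; rewrite addrC addrK.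
rewrite hAB hnu sum_sroot // in hl0 hg0.
rewrite !mxE s_last s_0 v_last v_0 /= in hl0 hg0.
have e1 : (l.+1 == 1)%N = false by lia.
rewrite e1 in hl0.
set t := u 0 ord_max in hu hl0; set s := u 0 0 in hg0.
have h1 : (A%:R - B%:R - p%:R + q%:R) * t = 0 :> R by rewrite -hl0 /= mulr0n; ring.
move/eqP: h1; rewrite mulf_eq0 (negbTE hu) orbF => /eqP h1.
have eA : A%:R = B%:R + p%:R - q%:R :> R by lra.
rewrite eA in hg0.
have e2 : (B%:R + p%:R - q%:R) * s + B%:R * (1 - s) - (\sum_(1 <= k < l) (c k)%:R + p%:R * s + q%:R * (1 - s) + 1)
   = B%:R - q%:R - \sum_(1 <= k < l) (c k)%:R - 1 :> R by ring.
rewrite e2 in hg0.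
split => //; lra.
Qed.

Arguments coord_key {R l u v} lam mu {nu}.
Arguments Pplus_red {R l u v lam}.
Arguments low_red_l {R l u v lam mu nu i}.
Arguments low_red_r {R l u v lam mu nu i}.

Theorem mainTheorem6 (R : realType) (l : nat) (hl : (0 < l)%N)
  (u v : 'rV[R]_(l.+1))
  (hu : u 0 ord_max != 0) (hv : v 0 ord_max != 0)
  (huv_indep : forall a b : R, a *: u + b *: v = 0 -> a = 0 /\ b = 0)
  (huv : u + v = fweight R l l)
  (lam mu nu : 'rV[R]_(l.+1))
  (hlow : low_triple u v lam mu nu) :
  (exists a b : nat, [/\ (1 <= a)%N, (1 <= b)%N &
      ((lam = a%:R *: u /\ mu = b%:R *: v) \/ (lam = b%:R *: v /\ mu = a%:R *: u))])
  /\ (forall a b : nat, lam = a%:R *: u -> mu = b%:R *: v -> (b <= a)%N ->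
        exists nu', [/\ Lplus nu', wle nu' (b%:R *: fweight R l l)
                      & nu = nu' + (a - b)%:R *: u])
  /\ ((lam = u /\ mu = v) \/ (lam = v /\ mu = u) -> nu = 0).
Proof.
have hlow' := hlow.
case: hlow => Plam Pmu Pnu H Hii.
have key := coord_key lam mu hl hu huv Pnu Hii.
have [a1 ha1] := Pplus_red hl huv Plam (fun i hi hp => low_red_l hlow' hi hp).
have [a2 ha2] := Pplus_red hl huv Pmu (fun i hi hp => low_red_r hlow' hi hp).
have AB1 : forall A B : nat, lam + mu = A%:R *: u + B%:R *: v -> (1 <= A)%N /\ (1 <= B)%N.
  move=> A B hAB; have [c [p [q [_ _ hq hp]]]] := key A B hAB.
  have C0 : 0 <= \sum_(1 <= k < l) (c k)%:R :> R by apply: sumr_ge0 => k _; apply: ler0n.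
  have q0 : 0 <= q%:R :> R by apply: ler0n.
  have p0 : 0 <= p%:R :> R by apply: ler0n.
  by rewrite -!(ler1n R); split; lra.
split.
  case: ha1 => e1; case: ha2 => e2; rewrite e1 e2.
  - have hh : lam + mu = (a1 + a2)%N%:R *: u + 0%N%:R *: v.
      by rewrite e1 e2 natrD scalerDl scale0r addr0.
    by have [] := AB1 _ _ hh.
  - have [h1 h2] := AB1 a1 a2 ltac:(by rewrite e1 e2).
    by exists a1, a2; split => //; left.
  - have hh : lam + mu = a2%:R *: u + a1%:R *: v by rewrite e1 e2 addrC.
    have [h1 h2] := AB1 _ _ hh.
    by exists a2, a1; split => //; right.
  - have hh : lam + mu = 0%N%:R *: u + (a1 + a2)%N%:R *: v.
      by rewrite e1 e2 natrD scalerDl scale0r add0r.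
    by have [] := AB1 _ _ hh.
split.
  move=> a b hla hmu hba.
  have [c [p [q [hnu hpq _ _]]]] := key a b ltac:(by rewrite hla hmu).
  have hp : p = (q + (a - b))%N.
    apply/eqP; rewrite -(eqr_nat R) natrD natrB //; apply/eqP; lra.
  exists (\sum_(1 <= k < l) (c k)%:R *: fweight R l k + q%:R *: fweight R l l).
  split.
  - exists (fun k => if k == l then q else c k).
    rewrite big_nat_recr ?eqxx //=; congr (_ + _).
    rewrite big_seq_cond [RHS]big_seq_cond; apply: eq_bigr => k.
    rewrite mem_index_iota andbT => /andP[_ hk].
    by have -> : (k == l) = false by lia.
  - rewrite /wle.
    have -> : b%:R *: fweight R l l -
        (\sum_(1 <= k < l) (c k)%:R *: fweight R l k + q%:R *: fweight R l l) =
      lam + mu - (nu + \sum_(1 <= i < l.+1) sroot R l i) + \sum_(1 <= i < l.+1) sroot R l i.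
      rewrite hla hmu hnu hp natrD natrB // -huv; lin.
    apply: Rplus_add => //; rewrite sum_sroot //; apply: eb_Rplus; lia.
  - by rewrite hnu hp natrD -huv; lin.
move=> hcase.
have hAB : lam + mu = 1%:R *: u + 1%:R *: v.
  by case: hcase => -[-> ->]; rewrite !scale1r // addrC.
have [c [p [q [hnu hpq hq _]]]] := key 1%N 1%N hAB.
have C0 : 0 <= \sum_(1 <= k < l) (c k)%:R :> R by apply: sumr_ge0 => k _; apply: ler0n.
have q0 : 0 <= q%:R :> R by apply: ler0n.
have eq0 : q%:R = 0 :> R by lra.
have ep0 : p%:R = 0 :> R by lra.
have eC : \sum_(1 <= k < l) (c k)%:R = 0 :> R by lra.
move/eqP: eC; rewrite psumr_eq0; last by move=> k _; apply: ler0n.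
move/allP => hc.
rewrite hnu eq0 ep0 !scale0r !addr0 big1_seq // => k /andP[_ hk].
by have /eqP -> := hc k hk; rewrite scale0r.
Qed.
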